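(* Let $f:\mathbb{Z}^n\to\mathbb{R}\cup\{+\infty\}$ be a function satisfying condition (SSQM$^\natural$). For $x,y\in\mathrm{dom}\,f$, if $f(x)>f(y)$, then there exist some $i\in\mathrm{supp}^+(x-y)\cup\{0\}$ and $j\in\mathrm{supp}^-(x-y)\cup\{0\}$ satisfying $f(x)>f(x-\chi_i+\chi_j)$.
   Context: $N=\{1,\dots,n\}$. For $i\in N$, $\chi_i\in\{0,1\}^n$ is the characteristic vector of $i$, and $\chi_0=0$. $\mathrm{dom}\,f=\{x\in\mathbb{Z}^n\mid f(x)<+\infty\}$. For $x,y\in\mathbb{Z}^n$, $\mathrm{supp}^+(x-y)=\{i\in N\mid x(i)>y(i)\}$ and $\mathrm{supp}^-(x-y)=\{j\in N\mid x(j)<y(j)\}$. Condition (SSQM$^\natural$): for all $x,y\in\mathrm{dom}\,f$ and all $i\in\mathrm{supp}^+(x-y)$ there exists $j\in\mathrm{supp}^-(x-y)\cup\{0\}$ such that at least one of the following holds: (a) $f(x-\chi_i+\chi_j)<f(x)$; (b) $f(y+\chi_i-\chi_j)<f(y)$; (c) $f(x-\chi_i+\chi_j)=f(x)$ and $f(y+\chi_i-\chi_j)=f(y)$. *)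

(* Defs.v *)
From HB Require Import structures.
From mathcomp Require Import all_boot all_order all_algebra.
From mathcomp Require Import reals constructive_ereal.
Set Implicit Arguments. Unset Strict Implicit. Unset Printing Implicit Defensive.
Import Order.TTheory GRing.Theory Num.Theory.
Local Open Scope ring_scope.
Local Open Scope ereal_scope.

(* Points of Z^n are integer row vectors 'rV[int]_n; the index set N = {1..n}
   is 'I_n. An index in N ∪ {0} is an option 'I_n, None standing for 0. *)

Definition chi (n : nat) (i : option 'I_n) : 'rV[int]_n :=
  if i is Some k then delta_mx ord0 k else 0%R.

(* f : Z^n -> R ∪ {+oo}, modelled as a function into \bar R never taking -oo *)
Definition no_minus_infty (R : realType) n (f : 'rV[int]_n -> \bar R) : Prop :=
  forall x, f x <> -oo.

Definition in_dom (R : realType) n (f : 'rV[int]_n -> \bar R) (x : 'rV[int]_n) : Prop :=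
  f x < +oo.

Definition in_supp_plus n (x y : 'rV[int]_n) (i : 'I_n) : Prop := (y ord0 i < x ord0 i)%R.
Definition in_supp_minus n (x y : 'rV[int]_n) (j : 'I_n) : Prop := (x ord0 j < y ord0 j)%R.

Definition in_supp_plus0 n (x y : 'rV[int]_n) (i : option 'I_n) : Prop :=
  if i is Some k then in_supp_plus x y k else True.
Definition in_supp_minus0 n (x y : 'rV[int]_n) (j : option 'I_n) : Prop :=
  if j is Some k then in_supp_minus x y k else True.

Definition SSQMnat (R : realType) n (f : 'rV[int]_n -> \bar R) : Prop :=
  forall x y, in_dom f x -> in_dom f y ->
  forall i : 'I_n, in_supp_plus x y i ->
  exists j : option 'I_n, in_supp_minus0 x y j /\
    [\/ f (x - chi (Some i) + chi j)%R < f x,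
        f (y + chi (Some i) - chi j)%R < f y
      | f (x - chi (Some i) + chi j)%R = f x /\ f (y + chi (Some i) - chi j)%R = f y].

(* Main.v *)
Require Import Defs.
From HB Require Import structures.
From mathcomp Require Import all_boot all_order all_algebra.
From mathcomp Require Import reals constructive_ereal.
From mathcomp Require Import zify.
Set Implicit Arguments. Unset Strict Implicit.
Import Order.TTheory GRing.Theory Num.Theory.
Local Open Scope ring_scope.

Definition dist n (x y : 'rV[int]_n) : nat := (\sum_(k < n) `|x ord0 k - y ord0 k|%N)%N.
Definition toward n (x z' z : 'rV[int]_n) := forall k,
  (z' ord0 k < x ord0 k -> z ord0 k < x ord0 k) /\ (x ord0 k < z' ord0 k -> x ord0 k < z ord0 k).

Lemma chiE n (i : option 'I_n) k : chi i ord0 k = (if i is Some i' then (k == i')%:R else 0).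
Proof. by case: i => [i'|]; rewrite /chi ?mxE // eqxx. Qed.

Lemma step_gen n (x z : 'rV[int]_n) k (s : int) :
  (s = 1 /\ z ord0 k < x ord0 k \/ s = -1 /\ x ord0 k < z ord0 k) ->
  toward x (z + s *: chi (Some k)) z /\ (dist x (z + s *: chi (Some k))).+1 = dist x z.
Proof.
move=> hs; split.
  move=> k'; rewrite !mxE !eqxx /=; case: eqP => [->|_] /=; lia.
rewrite /dist (bigD1 k) // [in RHS](bigD1 k) //= -addSn; congr (_ + _)%N.
  rewrite !mxE !eqxx /= mulr1; lia.
apply: eq_bigr => k' hk; rewrite !mxE !eqxx (negbTE hk) /=; congr absz; lia.
Qed.

Lemma toward_trans n (x a b c : 'rV[int]_n) : toward x a b -> toward x b c -> toward x a c.
Proof. move=> h1 h2 k; have [? ?] := h1 k; have [? ?] := h2 k; split; auto. Qed.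

Lemma toward_plus0 n (x y' y : 'rV[int]_n) i : toward x y' y -> in_supp_plus0 x y' i -> in_supp_plus0 x y i.
Proof. by case: i => //= k h; case: (h k). Qed.

Lemma toward_minus0 n (x y' y : 'rV[int]_n) i : toward x y' y -> in_supp_minus0 x y' i -> in_supp_minus0 x y i.
Proof. by case: i => //= k h; case: (h k). Qed.

Lemma move_down n (x z : 'rV[int]_n) j : in_supp_minus x z j ->
  toward x (z - chi (Some j)) z /\ (dist x (z - chi (Some j)) < dist x z)%N.
Proof.
move=> hj; have [h1 h2] := @step_gen n x z j (-1) (or_intror (conj erefl hj)).
by rewrite scaleN1r in h1 h2; rewrite -h2.
Qed.

Lemma move_toward n (x z : 'rV[int]_n) i j : in_supp_plus x z i -> in_supp_minus0 x z j ->
  toward x (z + chi (Some i) - chi j) z /\ (dist x (z + chi (Some i) - chi j) < dist x z)%N.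
Proof.
move=> hi hj; have [h1 h2] := @step_gen n x z i 1 (or_introl (conj erefl hi)).
rewrite scale1r in h1 h2.
case: j hj => [j|] /= hj.
  have hj' : in_supp_minus x (z + chi (Some i)) j.
    rewrite /in_supp_minus !mxE; move: hj; rewrite /in_supp_minus; case: (_ && _) => /=; lia.
  have [h3 h4] := move_down hj'.
  split; first exact: toward_trans h3 h1.
  by rewrite -h2; apply: leqW.
by rewrite subr0; split => //; rewrite -h2.
Qed.

Lemma main (R : realType) n (f : 'rV[int]_n -> \bar R) x :
  SSQMnat f -> in_dom f x -> forall m y, (dist x y < m)%N -> in_dom f y -> (f y < f x)%E ->
  exists (i j : option 'I_n),
    [/\ in_supp_plus0 x y i, in_supp_minus0 x y j & (f (x - chi i + chi j)%R < f x)%E].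
Proof.
move=> Hs hx; elim=> // m IH y hd hy hlt.
have rec : forall y', toward x y' y -> (dist x y' < dist x y)%N -> (f y' <= f y)%E ->
    exists (i j : option 'I_n),
    [/\ in_supp_plus0 x y i, in_supp_minus0 x y j & (f (x - chi i + chi j)%R < f x)%E].
  move=> y' ht hd' hle.
  have [|||i [j [h1 h2 h3]]] := IH y'.
  - exact: leq_trans hd' hd.
  - exact: le_lt_trans hle hy.
  - exact: le_lt_trans hle hlt.
  by exists i, j; split => //; [exact: toward_plus0 ht h1 | exact: toward_minus0 ht h2].
case: (pickP (fun k => y ord0 k < x ord0 k)) => [i hi | hnone].
  have [j [hj H3]] := Hs x y hx hy i hi.
  have [ht hd'] := move_toward hi hj.
  case: H3 => [ha | hb | [hc1 hc2]].
  - by exists (Some i), j.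
  - exact: rec ht hd' (ltW hb).
  - by apply: rec ht hd' _; rewrite hc2.
case: (pickP (fun k => x ord0 k < y ord0 k)) => [j hj | hnone2].
  have [k [hk H3]] := Hs y x hy hx j hj.
  case: k hk H3 => [k|] /= hk H3.
    by move: (hnone k); rewrite /= hk.
  rewrite addr0 subr0 in H3.
  have [ht hd'] := move_down hj.
  case: H3 => [ha | hb | [hc1 hc2]].
  - exact: rec ht hd' (ltW ha).
  - by exists None, (Some j); split => //=; rewrite subr0.
  - by apply: rec ht hd' _; rewrite hc1.
have exy : x = y.
  apply/rowP => k; have := hnone k; have := hnone2 k; rewrite /= => h1 h2.
  have -> : (0 : 'I_1) = ord0 by apply/val_inj.
  lia.
by move: hlt; rewrite exy ltxx.
Qed.

Local Open Scope ereal_scope.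

Theorem lemma2p4 (R : realType) (n : nat) (f : 'rV[int]_n -> \bar R) :
  no_minus_infty f -> SSQMnat f ->
  forall x y : 'rV[int]_n, in_dom f x -> in_dom f y ->
  f y < f x ->
  exists (i j : option 'I_n),
    [/\ in_supp_plus0 x y i, in_supp_minus0 x y j &
        f (x - chi i + chi j)%R < f x].
Proof.
move=> _ Hs x y hx hy hlt.
exact: (@main R n f x Hs hx (dist x y).+1 y (ltnSn _) hy hlt).
Qed.
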